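(* For real numbers $Q_1,Q_2,\dots$ let $A_n$ be the adjacency matrix of the path on $n$ vertices $1,2,\dots,n$, let $H_n = A_n + \mathrm{diag}(Q_1,\dots,Q_n)$ and $p_n = p_n(x;Q_1,\dots,Q_n) = \det(xI_n - H_n)$ (with $p_0 = 1$, $p_{-1}=0$). Let $L_{2n}$ be the characteristic polynomial of $A_{2n} + \mathrm{diag}(Q_1,\dots,Q_n,Q_n,\dots,Q_1)$ and $L_{2n+1}$ that of $A_{2n+1} + \mathrm{diag}(Q_1,\dots,Q_n,Q_{n+1},Q_n,\dots,Q_1)$. Then (1) $p_n(x;Q_1,\dots,Q_n) = (x-Q_n)\,p_{n-1}(x;Q_1,\dots,Q_{n-1}) - p_{n-2}(x;Q_1,\dots,Q_{n-2})$; (2) $L_{2n} = (p_n + p_{n-1})(p_n - p_{n-1})$; (3) $L_{2n+1} = p_n\,(p_{n+1} - p_{n-1})$, where $p_{n+1} = p_{n+1}(x;Q_1,\dots,Q_{n+1})$. Moreover, in each of the factorizations (2) and (3), the roots of the first factor are eigenvalues of the corresponding symmetric-potential path Hamiltonian with eigenvectors $f$ satisfying $f(1) = -f(N) \neq 0$, and the roots of the second factor are eigenvalues with eigenvectors $f$ satisfying $f(1) = f(N)\neq 0$, where $N\in\{2n,2n+1\}$ is the last vertex of the path.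
   Context: Vertices of the path on $N$ vertices are labeled $1,\dots,N$ in order, so $1$ and $N$ are the endpoints. *)

(* Defs.v *)
From mathcomp Require Import all_boot all_order all_algebra.
Set Implicit Arguments. Unset Strict Implicit. Unset Printing Implicit Defensive.
Import Order.TTheory GRing.Theory Num.Theory.
Local Open Scope ring_scope.

Section PathDefs.
Variable R : realFieldType.

(* Adjacency matrix of the path on N vertices; vertex k (1-based) is the
   ordinal k-1. *)
Definition pathA (N : nat) : 'M[R]_N :=
  \matrix_(i, j) (if (i.+1 == j :> nat) || (j.+1 == i :> nat) then 1 else 0).

(* H = A_N + diag(V 1, ..., V N), V indexed from 1 (V 0 unused). *)
Definition pathH (N : nat) (V : nat -> R) : 'M[R]_N :=
  pathA N + diag_mx (\row_(i < N) V i.+1).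

Definition p (n : nat) (Q : nat -> R) : {poly R} := char_poly (pathH n Q).

Definition pprev (n : nat) (Q : nat -> R) : {poly R} :=
  if n is k.+1 then p k Q else 0.

(* Symmetric potential on the path with N vertices: vertex k gets
   Q_(min k (N+1-k)), i.e. Q_1,...,Q_n,Q_n,...,Q_1 for N = 2n and
   Q_1,...,Q_n,Q_(n+1),Q_n,...,Q_1 for N = 2n+1. *)
Definition symQ (N : nat) (Q : nat -> R) (k : nat) : R := Q (minn k (N.+1 - k)).

Definition symH (N : nat) (Q : nat -> R) : 'M[R]_N := pathH N (symQ N Q).

Definition L (N : nat) (Q : nat -> R) : {poly R} := char_poly (symH N Q).

Definition eigvec_end (N : nat) (M : 'M[R]_N) (x : R) (s : R) (f : 'cV[R]_N) :=
  M *m f = x *: f /\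
  exists (i1 iN : 'I_N), val i1 = 0%N /\ val iN = N.-1 /\
    f i1 0 != 0 /\ f i1 0 = s * f iN 0.

End PathDefs.

(* Main.v *)
Require Import Defs.
From mathcomp Require Import all_boot all_order all_algebra.
From mathcomp Require Import zify ring.
Set Implicit Arguments. Unset Strict Implicit. Unset Printing Implicit Defensive.
Import Order.TTheory GRing.Theory Num.Theory.
Local Open Scope ring_scope.

Section Cont.
Variable T : comPzRingType.

Fixpoint cont (a : nat -> T) (m : nat) : T :=
  match m with
  | 0%N => 1
  | S m' => match m' with
            | 0%N => a 0%N
            | S m'' => a m' * cont a m' - cont a m''
            end
  end.

Definition cprev (a : nat -> T) (m : nat) : T :=
  if m is m'.+1 then cont a m' else 0.

Lemma contS a m : cont a m.+1 = a m * cont a m - cprev a m.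
Proof. by case: m => [|m] //=; rewrite mulr1 subr0. Qed.

Lemma cprevS a m : cprev a m.+1 = cont a m.
Proof. by []. Qed.

Lemma eq_cont a b n : (forall i, (i < n)%N -> a i = b i) ->
  cont a n = cont b n /\ cprev a n = cprev b n.
Proof.
elim: n => [|n IH] H //.
have [IH1 IH2] := IH (fun i Hi => H i (ltnW Hi)).
by rewrite !contS !cprevS IH1 IH2 H.
Qed.

Definition sh (m : nat) (a : nat -> T) := fun i => a (m + i)%N.

Lemma cont_split a m k :
  cont a (m + k) = cont a m * cont (sh m a) k - cprev a m * cprev (sh m.+1 a) k.
Proof.
suff: (cont a (m + k) = cont a m * cont (sh m a) k - cprev a m * cprev (sh m.+1 a) k) /\
      (cont a (m + k.+1) = cont a m * cont (sh m a) k.+1 - cprev a m * cprev (sh m.+1 a) k.+1).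
  by case.
elim: k => [|k [IH1 IH2]].
  split; first by rewrite addn0 mulr1 mulr0 subr0.
  by rewrite addn1 contS cprevS [cont _ 1]/= /sh addn0 [cont _ 0]/= mulr1 mulrC.
split=> //.
have -> : cont a (m + k.+2) = a (m + k.+1)%N * cont a (m + k.+1) - cont a (m + k)
  by rewrite !addnS.
rewrite IH2 IH1.
rewrite [cont (sh m a) k.+2]contS cprevS [cprev (sh m.+1 a) k.+2]cprevS.
rewrite [cont (sh m.+1 a) k.+1]contS cprevS.
have -> : sh m a k.+1 = a (m + k.+1)%N by [].
have -> : sh m.+1 a k = a (m + k.+1)%N by rewrite /sh addSnnS.
ring.
Qed.

Lemma cont_rev n a : cont (fun i => a (n.-1 - i)%N) n = cont a n.
Proof.
move: a.
suff: forall n, (forall a, cont (fun i => a (n.-1 - i)%N) n = cont a n) /\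
                (forall a, cont (fun i => a (n - i)%N) n.+1 = cont a n.+1).
  by move=> H; case: (H n).
clear n; elim=> [|k [IH1 IH2]]; first by split=> a //=; rewrite subn0.
split=> // a.
rewrite contS cprevS.
have E1 : cont (fun i => a (k.+1 - i)%N) k.+1 = cont (sh 1 a) k.+1.
  rewrite -IH2; apply: (proj1 (eq_cont _)) => i Hi; rewrite /sh; congr a; lia.
have E2 : cont (fun i => a (k.+1 - i)%N) k = cont (sh 2 a) k.
  rewrite -IH1; apply: (proj1 (eq_cont _)) => i Hi; rewrite /sh; congr a; lia.
rewrite E1 E2 subnn.
have := cont_split a 1 k.+1; rewrite add1n => ->.
by rewrite cprevS [cont a 1]/= [cont a 0]/= mul1r.
Qed.

End Cont.

Section Det.
Variable T : comPzRingType.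

Definition tri (a : nat -> T) (i j : nat) : T :=
  if i == j then a i else if (i.+1 == j) || (j.+1 == i) then -1 else 0.

Lemma tri_diag a i : tri a i i = a i.
Proof. by rewrite /tri eqxx. Qed.
Lemma tri_adj a i j : (i.+1 == j) || (j.+1 == i) -> tri a i j = -1.
Proof. move=> H; rewrite /tri H; case: eqP => // E; move: H; rewrite E; lia. Qed.
Lemma tri_far a i j : (i.+1 < j)%N || (j.+1 < i)%N -> tri a i j = 0.
Proof.
move=> H; rewrite /tri.
have -> : (i == j) = false by apply/eqP; lia.
have -> : (i.+1 == j) || (j.+1 == i) = false by apply/negP => /orP [] /eqP; lia.
by [].
Qed.

Lemma lift_w n (w : 'I_n.+2) (j : 'I_n.+1) : val w = n ->
  val (lift w j) = if (j < n)%N then val j else (val j).+1.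
Proof. by move=> Hw; rewrite /= /bump Hw; case: ltnP => H; rewrite ?add0n ?add1n. Qed.

Lemma sign_even m : (-1) ^+ (m + m) = 1 :> T.
Proof. by rewrite addnn -signr_odd odd_double. Qed.
Lemma sign_odd m : (-1) ^+ (m.+1 + m) = -1 :> T.
Proof. by rewrite addSn exprS addnn -signr_odd odd_double mulr1. Qed.

Lemma det_tri a N (A : 'M[T]_N) :
  (forall i j : 'I_N, A i j = tri a i j) -> \det A = cont a N.
Proof.
move: A.
suff: forall N, (forall A : 'M[T]_N, (forall i j : 'I_N, A i j = tri a i j) -> \det A = cont a N) /\
   (forall A : 'M[T]_N.+1, (forall i j : 'I_N.+1, A i j = tri a i j) -> \det A = cont a N.+1).
  by move=> H; case: (H N).
clear N; elim=> [|n [IH1 IH2]].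
  split=> A HA; first by rewrite det_mx00.
  by rewrite det_mx11 HA tri_diag.
split=> // A HA.
rewrite (expand_det_row A ord_max) big_ord_recr /= big_ord_recr /= big1 ?add0r; last first.
  move=> j _; rewrite HA tri_far ?mul0r //=.
  by apply/orP; right; have := ltn_ord j; lia.
rewrite !HA /= tri_diag tri_adj; last by rewrite eqxx orbT.
rewrite /cofactor /= sign_even sign_odd.
rewrite (IH2 (row' ord_max (col' ord_max A))); last first.
  by move=> i j; rewrite !mxE HA !lift_max.
set M' := row' _ _.
rewrite (expand_det_col M' ord_max) big_ord_recr /= big1 ?add0r; last first.
  move=> i _; rewrite /M' !mxE HA lift_max lift_w //= ltnn tri_far ?mul0r //.
  by apply/orP; left; have := ltn_ord i; lia.
rewrite /M' /cofactor !mxE HA lift_max lift_w //= ltnn tri_adj ?eqxx //.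
rewrite sign_even mul1r.
rewrite (IH1 (row' ord_max (col' ord_max M'))); last first.
  move=> i j; rewrite /M' !mxE HA !lift_max lift_w //=; have -> : bump n j = j by rewrite /bump leqNgt ltn_ord.
  by rewrite ltn_ord.
ring.
Qed.

End Det.

Section Eig.
Variable R : realFieldType.

Lemma charH N (V : nat -> R) :
  char_poly (pathH N V) = cont (fun i => 'X - (V i.+1)%:P) N.
Proof.
rewrite /char_poly; apply: det_tri => i j; rewrite /pathH /pathA !mxE /tri.
case: eqP => [E|E].
  rewrite -E eqxx mulr1n.
  have -> : (i.+1 == i :> nat) = false by apply/eqP; lia.
  by rewrite /= add0r.
have -> : (i == j :> nat) = false by apply/eqP => E'; apply: E; apply: val_inj.
rewrite /= mulr0n sub0r addr0.
by case: ifP => _; rewrite ?rmorph1 ?rmorph0 ?oppr0.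
Qed.

Lemma cont_hornerX (b : nat -> R) x n :
  (cont (fun i => 'X - (b i)%:P) n).[x] = cont (fun i => x - b i) n /\
  (cprev (fun i => 'X - (b i)%:P) n).[x] = cprev (fun i => x - b i) n.
Proof.
elim: n => [|n [IH1 IH2]]; first by rewrite /= hornerC horner0.
by rewrite !contS !cprevS hornerD hornerN hornerM IH1 IH2 hornerXsubC.
Qed.


Lemma sum_ind N k (c : R) :
  \sum_(j < N) ((j : nat) == k)%:R * c = if (k < N)%N then c else 0.
Proof.
case: ltnP => Hk.
  rewrite (bigD1 (Ordinal Hk)) //= eqxx mul1r big1 ?addr0 // => j Hj.
  have -> : ((j : nat) == k) = false.
    by apply/eqP => E; move/eqP: Hj; apply; apply: val_inj.
  by rewrite mul0r.
apply: big1 => j _.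
have -> : ((j : nat) == k) = false by apply/eqP; have := ltn_ord j; lia.
by rewrite mul0r.
Qed.

Lemma eig_mx N (V : nat -> R) x (h : nat -> R) :
  h 0%N = 0 -> h N.+1 = 0 ->
  (forall k, (0 < k <= N)%N -> h k.-1 + h k.+1 + V k * h k = x * h k) ->
  pathH N V *m (\col_(i < N) h i.+1) = x *: \col_(i < N) h i.+1.
Proof.
move=> h0 hN H; apply/matrixP => i j; rewrite ord1.
rewrite /pathH mulmxDl mul_diag_mx !mxE.
have -> : \sum_j0 (pathA R N i j0 * (\col_i0 h i0.+1) j0 0) =
   \sum_(j0 < N) (((j0 : nat) == i.+1)%:R * h i.+2 + ((j0 : nat) == i.-1)%:R * (if (0 < i)%N then h i else 0)).
  apply: eq_bigr => j0 _; rewrite !mxE.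
  case: (i : nat) => [|i'] /=.
    rewrite orbF mulr0 addr0 eq_sym; by case: eqP => [->|_]; rewrite ?mul1r ?mul0r.
  rewrite eqSS eq_sym; case: eqP => [->|_] /=.
    have -> : (i'.+2 == i')%N = false by apply/eqP; lia.
    by rewrite mul0r addr0.
  by case: eqP => [->|_]; rewrite ?eqxx ?mul1r ?mul0r ?add0r ?addr0.
rewrite big_split /= !sum_ind.
have := H i.+1; rewrite /= ltn_ord => /(_ isT) <-.
congr (_ + _); rewrite addrC; congr (_ + _).
  have Hi := ltn_ord i; case: (i : nat) Hi => [|i'] Hi /=; [by rewrite h0; case: ifP | by rewrite (ltnW Hi)].
by have Hi := ltn_ord i; case: ltnP => // Hi'; have -> : i.+2 = N.+1 by lia.

Qed.

End Eig.

Section Master.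
Variable R : realFieldType.

Lemma reflect_eq N (V : nat -> R) x (h : nat -> R) (s : R) :
  s * s = 1 ->
  (forall k, (0 < k <= N)%N -> V (N.+1 - k)%N = V k) ->
  (forall k, (k <= N.+1)%N -> h (N.+1 - k)%N = s * h k) ->
  (forall k, (0 < k)%N -> (k.*2 <= N.+1)%N -> h k.-1 + h k.+1 + V k * h k = x * h k) ->
  forall k, (0 < k <= N)%N -> h k.-1 + h k.+1 + V k * h k = x * h k.
Proof.
move=> ss HV Hh Hl k /andP [k0 kN].
case: (leqP k.*2 N.+1) => Hk; first exact: Hl.
set k' := (N.+1 - k)%N.
have hk' : k' = (N.+1 - k)%N by [].
clearbody k'.
have k'0 : (0 < k')%N by lia.
have Hk' : (k'.*2 <= N.+1)%N by lia.
have E := Hl k' k'0 Hk'.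
have -> : k.-1 = (N.+1 - k'.+1)%N by lia.
have -> : k.+1 = (N.+1 - k'.-1)%N by lia.
have -> : k = (N.+1 - k')%N by lia.
rewrite HV; last by apply/andP; split; lia.
rewrite !Hh; try lia.
transitivity (s * (h k'.-1 + h k'.+1 + V k' * h k')); first ring.
by rewrite E; ring.
Qed.

Variable Q : nat -> R.
Variable x : R.
Let ev := fun i => x - Q i.+1.
Let P := cprev ev.

Lemma Prec k : (0 < k)%N -> P k.+1 = (x - Q k) * P k - P k.-1.
Proof. by case: k => // k _; rewrite /P cprevS contS cprevS. Qed.

Lemma master N (s : R) : s * s = 1 -> (0 < N)%N ->
  (forall m, N = m.*2 -> P m.+1 = s * P m) ->
  (forall m, N.+1 = m.*2 -> P m.+1 = s * P m.-1) ->
  (forall m, N.+1 = m.*2 -> s * P m = P m) ->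
  exists f : 'cV[R]_N, eigvec_end (symH N Q) x s f.
Proof.
move=> ss N0 hE hO hM.
pose h k := if (k.*2 <= N.+1)%N then P k else s * P (N.+1 - k)%N.
have P0 : P 0%N = 0 by [].
have P1 : P 1%N = 1 by [].
exists (\col_(i < N) h i.+1); split.
  apply: eig_mx.
  - by rewrite /h /=.
  - by rewrite /h subnn; case: ifP => H; [move: H; lia | rewrite P0 mulr0].
  have ss2 := ss; apply: reflect_eq ss2 _ _ _.
  - move=> k Hk; rewrite /symQ; congr Q; lia.
  - move=> k Hk; rewrite /h.
    case: (ltngtP k.*2 N.+1) => H1.
    + have -> : ((N.+1 - k).*2 <= N.+1)%N = false by apply/negbTE; lia.
      by rewrite subKn.
    + have -> : ((N.+1 - k).*2 <= N.+1)%N = true by apply/idP; lia.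
      by rewrite mulrA ss mul1r.
    + have -> : (N.+1 - k = k)%N by lia.
      by rewrite -H1 leqnn hM.
  move=> k k0 Hk.
  have Vk : symQ N Q k = Q k by rewrite /symQ; congr Q; lia.
  have Hk1 : (k.-1.*2 <= N.+1)%N by lia.
  rewrite Vk /h Hk Hk1.
  have R1 := Prec k0.
  case: (leqP k.+1.*2 N.+1) => H2.
    by rewrite R1; ring.
  case: (boolP (N == k.*2)) => /eqP HN.
    have -> : (N.+1 - k.+1 = k)%N by lia.
    have := hE _ HN; rewrite R1 => HE.
    have -> : s * P k = (x - Q k) * P k - P k.-1 by rewrite HE.
    ring.
  have HN' : N.+1 = k.*2 by lia.
  have -> : (N.+1 - k.+1 = k.-1)%N by lia.
  have := hO _ HN'; rewrite R1 => HO.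
  have -> : s * P k.-1 = (x - Q k) * P k - P k.-1 by rewrite HO.
  ring.
have i1 : (0 < N)%N by [].
have iN : (N.-1 < N)%N by lia.
exists (Ordinal i1), (Ordinal iN); split => //; split => //.
rewrite !mxE /h /=.
have -> : (2 <= N.+1)%N by lia.
split; first exact: oner_neq0.
have -> : N.-1.+1 = N by lia.
case: ifP => H.
  have N1 : N = 1%N by lia.
  have := hM 1%N; rewrite N1 => /(_ erefl); rewrite P1 mulr1 => ->.
  by [].
have -> : (N.+1 - N = 1)%N by lia.
by rewrite P1 mulr1 ss.
Qed.

End Master.

Unset Implicit Arguments.

Theorem lemma2 (R : realFieldType) (Q : nat -> R) :
  (* (1) three-term recurrence, with p_0 = 1 and p_{-1} = 0 *)
  (p 0 Q = 1 /\
   (forall n : nat, (0 < n)%N ->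
      p n Q = ('X - (Q n)%:P) * pprev n Q - pprev (n.-1) Q)) /\
  (* (2) even case *)
  (forall n : nat,
     L n.*2 Q = (p n Q + pprev n Q) * (p n Q - pprev n Q) /\
     (forall x : R, root (p n Q + pprev n Q) x ->
        exists f : 'cV[R]_(n.*2), eigvec_end (symH n.*2 Q) x (-1) f) /\
     (forall x : R, root (p n Q - pprev n Q) x ->
        exists f : 'cV[R]_(n.*2), eigvec_end (symH n.*2 Q) x 1 f)) /\
  (* (3) odd case *)
  (forall n : nat,
     L n.*2.+1 Q = p n Q * (p n.+1 Q - pprev n Q) /\
     (forall x : R, root (p n Q) x ->
        exists f : 'cV[R]_(n.*2.+1), eigvec_end (symH n.*2.+1 Q) x (-1) f) /\
     (forall x : R, root (p n.+1 Q - pprev n Q) x ->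
        exists f : 'cV[R]_(n.*2.+1), eigvec_end (symH n.*2.+1 Q) x 1 f)).
Proof.
pose e := fun i => 'X - (Q i.+1)%:P.
have pC n : p n Q = cont e n by rewrite /p charH.
have ppC n : pprev n Q = cprev e n by case: n => [|n] //=; rewrite pC.
have hC n x : (p n Q).[x] = cont (fun i => x - Q i.+1) n by rewrite pC (cont_hornerX (fun i => Q i.+1) x n).1.
have hpC n x : (pprev n Q).[x] = cprev (fun i => x - Q i.+1) n by rewrite ppC (cont_hornerX (fun i => Q i.+1) x n).2.
have LC N : L N Q = cont (fun i => 'X - (symQ N Q i.+1)%:P) N by rewrite /L /symH charH.
have nn1 : (-1) * (-1) = 1 :> R by rewrite mulrNN mulr1.
have n11 : 1 * 1 = 1 :> R by rewrite mulr1.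
split.
  split; first by rewrite pC.
  by case=> [//|m] _; rewrite !pC !ppC cprevS contS.
split.
  move=> n; split.
    rewrite LC -addnn cont_split !pC !ppC.
    set d := fun i => _.
    have E1 : cont d n = cont e n.
      apply: (proj1 (eq_cont _)) => i Hi; rewrite /d /e /symQ; congr ('X - (Q _)%:P); lia.
    have E2 : cprev d n = cprev e n.
      apply: (proj2 (eq_cont _)) => i Hi; rewrite /d /e /symQ; congr ('X - (Q _)%:P); lia.
    have E3 : cont (sh n d) n = cont e n.
      rewrite -cont_rev; apply: (proj1 (eq_cont _)) => i Hi.
      rewrite /sh /d /e /symQ; congr ('X - (Q _)%:P); lia.
    have E4 : cprev (sh n.+1 d) n = cprev e n.
      rewrite /d; clear E1 E2 E3 d; case: n => [//|m]; rewrite !cprevS -cont_rev.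
      apply: (proj1 (eq_cont _)) => i Hi.
      rewrite /sh /e /symQ; congr ('X - (Q _)%:P); lia.
    rewrite E1 E2 E3 E4; ring.
  split.
    move=> x; rewrite /root hornerD hC hpC => /eqP Hr.
    case: n Hr => [|n] Hr; first by move: Hr; rewrite /= addr0 => /eqP; rewrite oner_eq0.
    apply: master => //.
    - move=> m Hm; have -> : m = n.+1 by lia.
      rewrite cprevS; apply/eqP; rewrite mulN1r -addr_eq0; exact/eqP.
    - move=> m Hm; lia.
    - move=> m Hm; lia.
  move=> x; rewrite /root hornerD hornerN hC hpC => /eqP Hr.
  case: n Hr => [|n] Hr; first by move: Hr; rewrite /= subr0 => /eqP; rewrite oner_eq0.
  apply: master => //.
  - move=> m Hm; have -> : m = n.+1 by lia.
    rewrite cprevS mul1r; apply/eqP; rewrite -subr_eq0; exact/eqP.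
  - move=> m Hm; lia.
  - move=> m Hm; lia.
move=> n; split.
  have -> : n.*2.+1 = (n + n.+1)%N by lia.
  rewrite LC cont_split !pC !ppC.
  set d := fun i => _.
  have E1 : cont d n = cont e n.
    apply: (proj1 (eq_cont _)) => i Hi; rewrite /d /e /symQ; congr ('X - (Q _)%:P); lia.
  have E2 : cprev d n = cprev e n.
    apply: (proj2 (eq_cont _)) => i Hi; rewrite /d /e /symQ; congr ('X - (Q _)%:P); lia.
  have E3 : cont (sh n d) n.+1 = cont e n.+1.
    rewrite -cont_rev; apply: (proj1 (eq_cont _)) => i Hi.
    rewrite /sh /d /e /symQ; congr ('X - (Q _)%:P); lia.
  have E4 : cprev (sh n.+1 d) n.+1 = cont e n.
    rewrite cprevS -cont_rev; apply: (proj1 (eq_cont _)) => i Hi.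
    rewrite /sh /d /e /symQ; congr ('X - (Q _)%:P); lia.
  rewrite E1 E2 E3 E4; ring.
split.
  move=> x; rewrite /root hC => /eqP Hr.
  case: n Hr => [|n] Hr; first by move: Hr => /eqP; rewrite oner_eq0.
  apply: master => //.
  - move=> m Hm; lia.
  - move=> m Hm; have -> : m = n.+2 by lia.
    rewrite (Prec _ _ (isT : (0 < n.+2)%N)) cprevS Hr mulr0 sub0r mulN1r.
    by [].
  - move=> m Hm; have -> : m = n.+2 by lia.
    by rewrite cprevS Hr mulr0.
move=> x; rewrite /root hornerD hornerN hC hpC => /eqP Hr.
apply: master => //.
- move=> m Hm; lia.
- move=> m Hm; have -> : m = n.+1 by lia.
  rewrite cprevS mul1r /=; apply/eqP; rewrite -subr_eq0; exact/eqP.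
- by move=> m Hm; rewrite mul1r.
Qed.
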